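(* Let $M$ be a $*$-left Ehresmann monoid with basis $H$, and suppose $m\in M$ has $H$-canonical form of length $n$. If $m=h_1\cdots h_n$ with $h_i\in H$ for $1\le i\le n$, then \[m=\big(h_1(h_2\cdots h_n)^+\big)\big(h_2(h_3\cdots h_n)^+\big)\cdots\big(h_{n-1}h_n^+\big)h_n\] is the $H$-canonical form of $m$ (in particular each displayed factor lies in $H$).
   Context: A $*$-left Ehresmann monoid is a monoid $M$ with unary operations $+,*$ such that $x^+x=x$, $(x^+y^+)^+=x^+y^+$, $x^+y^+=y^+x^+$, $(xy)^+=(xy^+)^+$, $xx^*=x$, $(x^* )^*=x^*$, $x^*y^*=y^*x^*$, $(xy^* )^*y^*=(xy^* )^*$, $(x^* )^+=x^*$, $(x^+)^*=x^+$. Projections: $E=\{a^+\}=\{a^*\}$, ordered by $e\le f$ iff $ef=e$; $\sigma$ is the least monoid congruence containing $E\times E$. $H\subseteq M$ is atomic if: (H1) $E\subseteq H$; (H2) $h\in H,e\in E$ imply $he\in H$ and $(he)^*=h^*e$; (H3) if $h\in H$, $k\in H\setminus E$, $h^*\ge k^+$ then $hk\in H$ and $(hk)^*=k^*$; (H4) every $m\in M$ is $\sigma$-related to some $h\in H$; (H5) if $h,k,w\in H$, $hk\,\sigma\,w$ and $k^*=w^*$, then some $u\in H$ has $u\,\sigma\,h$ and $u^*\ge k^+$. An expression $m=h_1\cdots h_n$ ($n\ge1$, $h_i\in H$) is in $H$-canonical form if $h_i^*<h_{i+1}^+$ for $1\le i<n$ and $h_i\notin E$ for $2\le i\le n$.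 $M$ has $H$-canonical forms if every element has exactly one expression in $H$-canonical form. $H$ is a basis of $M$ if $H$ generates $M$ as a semigroup, $H$ is atomic and $M$ has $H$-canonical forms. *)

(* Defs.v *)
From Stdlib Require Import List.
Import ListNotations.
Set Implicit Arguments.

Record SLEMonoid := {
  car :> Type;
  mul : car -> car -> car;
  one : car;
  plus : car -> car;
  star : car -> car;
  mul_assoc : forall x y z, mul x (mul y z) = mul (mul x y) z;
  mul_1l : forall x, mul one x = x;
  mul_1r : forall x, mul x one = x;
  ax1 : forall x, mul (plus x) x = x;
  ax2 : forall x y, plus (mul (plus x) (plus y)) = mul (plus x) (plus y);
  ax3 : forall x y, mul (plus x) (plus y) = mul (plus y) (plus x);
  ax4 : forall x y, plus (mul x y) = plus (mul x (plus y));
  ax5 : forall x, mul x (star x) = x;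
  ax6 : forall x, star (star x) = star x;
  ax7 : forall x y, mul (star x) (star y) = mul (star y) (star x);
  ax8 : forall x y, mul (star (mul x (star y))) (star y) = star (mul x (star y));
  ax9 : forall x, plus (star x) = star x;
  ax10 : forall x, star (plus x) = plus x
}.

Section Defs.
Variable M : SLEMonoid.

Local Notation "x * y" := (mul M x y).

Definition inE (e : M) : Prop := exists a : M, e = plus M a.

Definition ple (e f : M) : Prop := e * f = e.
Definition plt (e f : M) : Prop := ple e f /\ e <> f.

Definition monoid_congruence (R : M -> M -> Prop) : Prop :=
  (forall x, R x x) /\ (forall x y, R x y -> R y x) /\
  (forall x y z, R x y -> R y z -> R x z) /\
  (forall x y z, R x y -> R (z * x) (z * y) /\ R (x * z) (y * z)).

Definition sigma (x y : M) : Prop :=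
  forall R, monoid_congruence R -> (forall e f, inE e -> inE f -> R e f) -> R x y.

Definition prod (s : list M) : M := fold_right (mul M) (one M) s.

Definition atomic (H : M -> Prop) : Prop :=
  (forall e, inE e -> H e) /\
  (forall h e, H h -> inE e -> H (h * e) /\ star M (h * e) = star M h * e) /\
  (forall h k, H h -> H k -> ~ inE k -> ple (plus M k) (star M h) ->
              H (h * k) /\ star M (h * k) = star M k) /\
  (forall m, exists h, H h /\ sigma m h) /\
  (forall h k w, H h -> H k -> H w -> sigma (h * k) w -> star M k = star M w ->
              exists u, H u /\ sigma u h /\ ple (plus M k) (star M u)).

Definition canonical_form (H : M -> Prop) (hs : list M) (m : M) : Prop :=
  hs <> [] /\ Forall H hs /\ prod hs = m /\
  (forall i, S i < length hs ->
     plt (star M (nth i hs (one M))) (plus M (nth (S i) hs (one M)))) /\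
  (forall i, 1 <= i < length hs -> ~ inE (nth i hs (one M))).

Definition has_canonical_forms (H : M -> Prop) : Prop :=
  forall m, exists! hs, canonical_form H hs m.

Definition generates_semigroup (H : M -> Prop) : Prop :=
  forall m, exists hs, hs <> [] /\ Forall H hs /\ prod hs = m.

Definition basis (H : M -> Prop) : Prop :=
  generates_semigroup H /\ atomic H /\ has_canonical_forms H.

Fixpoint reform (s : list M) : list M :=
  match s with
  | [] => []
  | [h] => [h]
  | h :: t => (h * plus M (prod t)) :: reform t
  end.

End Defs.

(* Main.v *)
Require Import Defs.
From Stdlib Require Import List Lia Classical.
Import ListNotations.

Section S.
Variable M : SLEMonoid.
Variable H : M -> Prop.
Hypothesis hH2 : forall h e, H h -> inE M e -> H (mul M h e) /\ star M (mul M h e) = mul M (star M h) e.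
Hypothesis hH3 : forall h k, H h -> H k -> ~ inE M k -> ple M (plus M k) (star M h) ->
              H (mul M h k) /\ star M (mul M h k) = star M k.
Local Notation "x * y" := (mul M x y).
Local Notation o := (one M).

Lemma plus_one : plus M o = o.
Proof. pose proof (ax1 M o) as E. rewrite mul_1r in E. exact E. Qed.

Lemma plus_plus x : plus M (plus M x) = plus M x.
Proof. pose proof (ax2 M x o) as E. rewrite plus_one, !mul_1r in E. exact E. Qed.

Lemma plus_idem x : plus M x * plus M x = plus M x.
Proof. pose proof (ax1 M (plus M x)) as E. rewrite plus_plus in E. exact E. Qed.

Lemma prod_cons a l : prod M (a :: l) = a * prod M l.
Proof. reflexivity. Qed.

Lemma reform_cons2 h x r : reform M (h :: x :: r) = (h * plus M (prod M (x :: r))) :: reform M (x :: r).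
Proof. reflexivity. Qed.

Lemma reform_length L : length (reform M L) = length L.
Proof.
  induction L as [|h t IH]; [reflexivity|]. destruct t as [|x r]; [reflexivity|].
  rewrite reform_cons2. change (S (length (reform M (x :: r))) = S (length (x :: r))). rewrite IH. reflexivity.
Qed.

Lemma reform_prod L : prod M (reform M L) = prod M L.
Proof.
  induction L as [|h t IH]; [reflexivity|]. destruct t as [|x r]; [reflexivity|].
  rewrite reform_cons2, (prod_cons (h * _)), IH, (prod_cons h).
  rewrite <- mul_assoc, ax1. reflexivity.
Qed.

Lemma reform_Forall L : Forall H L -> Forall H (reform M L).
Proof.
  induction L as [|h t IH]; intros F; [constructor|]. inversion F; subst.
  destruct t as [|x r]; [assumption|].
  rewrite reform_cons2. constructor.
  - apply hH2; [assumption| exists (prod M (x :: r)); reflexivity].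
  - apply IH; assumption.
Qed.

Lemma reform_head_plus x r : plus M (nth 0 (reform M (x :: r)) o) = plus M (prod M (x :: r)).
Proof.
  destruct r as [|y r'].
  - simpl. rewrite mul_1r. reflexivity.
  - rewrite reform_cons2. simpl nth. rewrite (prod_cons x). symmetry; apply ax4.
Qed.

Lemma reform_chain L : Forall H L -> forall i, S i < length (reform M L) ->
  ple M (star M (nth i (reform M L) o)) (plus M (nth (S i) (reform M L) o)).
Proof.
  induction L as [|h t IH]; intros F i Hi; [simpl in Hi; lia|].
  inversion F; subst.
  destruct t as [|x r]; [simpl in Hi; lia|].
  rewrite reform_cons2 in *. destruct i as [|j].
  - change (ple M (star M (h * plus M (prod M (x :: r)))) (plus M (nth 0 (reform M (x :: r)) o))).
    rewrite reform_head_plus.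
    destruct (hH2 h (plus M (prod M (x :: r)))) as [_ E]; [assumption|eexists; reflexivity|].
    rewrite E. unfold ple. rewrite <- mul_assoc, plus_idem. reflexivity.
  - change (ple M (star M (nth j (reform M (x :: r)) o)) (plus M (nth (S j) (reform M (x :: r)) o))).
    apply IH; [assumption|]. change (S (S j) < S (length (reform M (x :: r)))) in Hi. lia.
Qed.

Lemma split_at (l : list M) i : S i < length l ->
  exists l1 l2, l = l1 ++ nth i l o :: nth (S i) l o :: l2 /\ length l1 = i.
Proof.
  revert l. induction i as [|i IH]; intros l Hl.
  - destruct l as [|a [|b l2]]; simpl in Hl; try lia. exists [], l2. split; reflexivity.
  - destruct l as [|a l']; simpl in Hl; [lia|].
    destruct (IH l') as [l1 [l2 [E L1]]]; [lia|].
    exists (a :: l1), l2. simpl. rewrite <- E, L1. split; reflexivity.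
Qed.

Lemma nthH l i : Forall H l -> i < length l -> H (nth i l o).
Proof. intros F Hi. rewrite Forall_forall in F. apply F, nth_In, Hi. Qed.

Lemma shorten_at R j : S j < length R -> Forall H R -> H (nth j R o * nth (S j) R o) ->
  exists L', length L' < length R /\ L' <> [] /\ Forall H L' /\ prod M L' = prod M R.
Proof.
  intros Hj F Hab. destruct (split_at R j Hj) as [l1 [l2 [E _]]].
  revert E Hab. generalize (nth j R o) (nth (S j) R o). intros a b E Hab. subst R.
  exists (l1 ++ (a * b) :: l2). split; [|split; [|split]].
  - rewrite !length_app. simpl. lia.
  - destruct l1; discriminate.
  - apply Forall_app in F. destruct F as [F1 F2].
    inversion F2; subst. inversion H3; subst. apply Forall_app; split; [assumption|].
    constructor; assumption.
  - clear. induction l1 as [|c l1 IH]; simpl.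
    + rewrite mul_assoc. reflexivity.
    + rewrite IH. reflexivity.
Qed.

Lemma reform_or_shorter L : L <> [] -> Forall H L ->
  canonical_form M H (reform M L) (prod M L) \/
  exists L', length L' < length L /\ L' <> [] /\ Forall H L' /\ prod M L' = prod M L.
Proof.
  intros NE F.
  destruct (classic (canonical_form M H (reform M L) (prod M L))) as [C|NC]; [left; exact C|right].
  pose proof (reform_length L) as lenR. pose proof (reform_Forall L F) as FR.
  pose proof (reform_prod L) as prodR. pose proof (reform_chain L F) as chain.
  set (R := reform M L) in *.
  assert (NER : R <> []). { intro E. rewrite E in lenR. destruct L; [congruence|discriminate]. }
  assert (Hbad : (exists i, S i < length R /\ star M (nth i R o) = plus M (nth (S i) R o)) \/
                 (exists i, 1 <= i < length R /\ inE M (nth i R o))).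
  { apply NNPP; intro Hn. apply NC. split; [exact NER|]. split; [exact FR|]. split; [exact prodR|]. split.
    - intros i Hi. split; [apply chain, Hi|]. intro Heq. apply Hn. left. exists i; auto.
    - intros i Hi Hin. apply Hn. right. exists i; auto. }
  assert (G : exists L', length L' < length R /\ L' <> [] /\ Forall H L' /\ prod M L' = prod M R).
  { destruct Hbad as [[i [Hi Heq]]|[i [Hi Hin]]].
    - apply (shorten_at R i Hi FR).
      assert (Hh : H (nth i R o)) by (apply nthH; [exact FR|lia]).
      assert (Hk : H (nth (S i) R o)) by (apply nthH; [exact FR|lia]).
      destruct (classic (inE M (nth (S i) R o))) as [Ein|Enot].
      + apply (hH2 _ _ Hh Ein).
      + apply (hH3 _ _ Hh Hk Enot). unfold ple. rewrite Heq. apply plus_idem.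
    - destruct i as [|j]; [lia|].
      apply (shorten_at R j ltac:(lia) FR).
      apply hH2; [apply nthH; [exact FR|lia]|exact Hin]. }
  destruct G as [L' [A [B [C D]]]]. exists L'. rewrite <- lenR, <- prodR. auto.
Qed.

Lemma exists_short n : forall L, length L <= n -> L <> [] -> Forall H L ->
  exists cs, canonical_form M H cs (prod M L) /\ length cs <= length L.
Proof.
  induction n as [|n IH]; intros L Hn NE F.
  - destruct L; [congruence|simpl in Hn; lia].
  - destruct (reform_or_shorter L NE F) as [C|[L' [A [B [C D]]]]].
    + exists (reform M L). split; [exact C|]. rewrite reform_length. lia.
    + destruct (IH L' ltac:(lia) B C) as [cs [Ccs Lcs]]. exists cs. rewrite <- D. split; [exact Ccs|lia].
Qed.

End S.

Theorem mainTheorem10 (M : SLEMonoid) (H : M -> Prop) :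
  basis M H ->
  forall (m : M) (n : nat),
    (exists cs, canonical_form M H cs m /\ length cs = n) ->
    forall hs : list M, length hs = n -> Forall H hs -> prod M hs = m ->
      canonical_form M H (reform M hs) m.
Proof.
  intros [_ [[_ [hH2 [hH3 _]]] hU]] m n [cs [Ccs Hlen]] hs Hhs F Hp.
  assert (NE : hs <> []).
  { intro E. subst hs. simpl in Hhs. destruct Ccs as [Cne _]. destruct cs; [congruence|simpl in Hlen; lia]. }
  destruct (reform_or_shorter M H hH2 hH3 hs NE F) as [C|[L' [A [B [C D]]]]].
  - rewrite <- Hp. exact C.
  - destruct (exists_short M H hH2 hH3 (length L') L' (le_n _) B C) as [cs' [Ccs' Lcs']].
    rewrite D, Hp in Ccs'.
    destruct (hU m) as [c0 [_ Hu]].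
    assert (cs = cs') as E by (rewrite <- (Hu cs Ccs); apply Hu; exact Ccs').
    subst cs'. lia.
Qed.
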